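(* Let $X$ be a separable Hilbert space over $K$ (with norm induced by the inner product) with orthonormal basis $\{e_j\}_{j=1,2,\ldots}\cup\{e_i^*\}_{i=1,2,\ldots}$, and let $Z$ be the proper closed subspace with orthonormal basis $\{e_j\}$. Let $F:Z\to\mathbb{R}$ be a continuous functional with $F(0)=0$, and suppose there are positive constants $M_1,M_2$ such that for all orthogonal vectors $z_1,z_2$ lying in the union of the one-dimensional subspaces spanned by the individual $e_j$, $F^+(z_1)+F^+(z_2)\le M_1\|z_1+z_2\|_X$ and $F^-(z_1)+F^-(z_2)\le M_2\|z_1+z_2\|_X$. Then there exists a continuous $\hat F:X\to\mathbb{R}$ with $\hat F(z)=F(z)$ for $z\in Z$ and $|\hat F(x_1)+\hat F(x_2)|\le(M_1+M_2)\|x_1+x_2\|_X$ for all orthogonal vectors $x_1,x_2$ lying in the union of the one-dimensional subspaces spanned by the individual $e_j$ or $e_i^*$.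
   Context: $K$ is $\mathbb{R}$ or $\mathbb{C}$. $F^+(z)=\max[F(z),0]$ and $F^-(z)=\max[-F(z),0]$. *)

(* Defs.v *)
From mathcomp Require Import all_boot all_order all_algebra.
From mathcomp Require Import reals.
From mathcomp.real_closed Require Import complex.

Set Implicit Arguments.
Unset Strict Implicit.
Unset Printing Implicit Defensive.

Import Order.TTheory GRing.Theory Num.Theory.
Local Open Scope ring_scope.

Variant scalars := RealScalars | ComplexScalars.

Definition scal (R : realType) (s : scalars) : numFieldType :=
  match s with RealScalars => (R : numFieldType) | ComplexScalars => (R[i] : numFieldType) end.

Definition sconj (R : realType) (s : scalars) : scal R s -> scal R s :=
  match s return scal R s -> scal R s with
  | RealScalars => fun x => x
  | ComplexScalars => fun x => @conjc R x
  end.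

Definition sre (R : realType) (s : scalars) : scal R s -> R :=
  match s return scal R s -> R with
  | RealScalars => fun x => x
  | ComplexScalars => fun x => @complex.Re R x
  end.

Section Hilbert.
Variables (R : realType) (s : scalars) (V : lmodType (scal R s)).
Variable ip : V -> V -> scal R s.

Definition is_inner_product : Prop :=
  [/\ forall (a : scal R s) (x y z : V), ip (a *: x + y) z = a * ip x z + ip y z,
      forall x y : V, ip y x = sconj (ip x y),
      forall x : V, 0 <= ip x x
    & forall x : V, ip x x = 0 -> x = 0].

Definition hnorm (x : V) : R := Num.sqrt (sre (ip x x)).

Definition hcomplete : Prop :=
  forall u : nat -> V,
    (forall eps : R, 0 < eps -> exists N : nat, forall m n : nat,
        (N <= m)%N -> (N <= n)%N -> hnorm (u m - u n) < eps) ->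
    exists l : V, forall eps : R, 0 < eps -> exists N : nat, forall n : nat,
        (N <= n)%N -> hnorm (u n - l) < eps.

Definition in_span (f : nat -> V) (x : V) : Prop :=
  exists (n : nat) (c : nat -> scal R s), x = \sum_(k < n) c k *: f k.

Definition in_cspan (f : nat -> V) (x : V) : Prop :=
  forall eps : R, 0 < eps -> exists y : V, in_span f y /\ hnorm (x - y) < eps.

Definition hilbert_with_onb (e es : nat -> V) : Prop :=
  [/\ is_inner_product, hcomplete,
      [/\ forall j k : nat, ip (e j) (e k) = (j == k)%:R,
          forall i k : nat, ip (es i) (es k) = (i == k)%:R
        & forall j i : nat, ip (e j) (es i) = 0]
    & forall (x : V) (eps : R), 0 < eps -> exists y z : V,
        [/\ in_span e y, in_span es z & hnorm (x - (y + z)) < eps]].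

Definition horth (x y : V) : Prop := ip x y = 0.

Definition on_axes (f : nat -> V) (x : V) : Prop :=
  exists (j : nat) (a : scal R s), x = a *: f j.

Definition continuous_on (A : V -> Prop) (F : V -> R) : Prop :=
  forall x : V, A x -> forall eps : R, 0 < eps ->
    exists2 delta : R, 0 < delta &
      forall y : V, A y -> hnorm (y - x) < delta -> `|F y - F x| < eps.

End Hilbert.

Definition posp (R : realType) (T : Type) (F : T -> R) (z : T) : R := Num.max (F z) 0.
Definition negp (R : realType) (T : Type) (F : T -> R) (z : T) : R := Num.max (- F z) 0.

(* Main.v *)
Require Import Defs.
From mathcomp Require Import all_boot all_order all_algebra.
From mathcomp Require Import classical_sets reals.
From mathcomp.real_closed Require Import complex.
From mathcomp Require Import ring lra.
From Stdlib Require Import ClassicalEpsilon.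
Import Order.TTheory GRing.Theory Num.Theory.
Local Open Scope ring_scope.
Definition sinj (R : realType) (s : scalars) (t : R) : scal R s :=
  match s return scal R s with RealScalars => t | ComplexScalars => (t%:C)%C end.

Section Sc.
Variables (R : realType) (s : scalars).
Implicit Types a b : scal R s.

Lemma sconjD a b : sconj (a + b) = sconj a + sconj b.
Proof. by case: s a b => a b //=; rewrite rmorphD. Qed.
Lemma sconjN a : sconj (- a) = - sconj a.
Proof. by case: s a => a //=; rewrite rmorphN. Qed.
Lemma sconjM a b : sconj (a * b) = sconj a * sconj b.
Proof. by case: s a b => a b //=; rewrite rmorphM. Qed.
Lemma sconjK a : sconj (sconj a) = a.
Proof. by case: s a => a //=; rewrite conjcK. Qed.
Lemma sconj0 : sconj (0 : scal R s) = 0.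
Proof. case: s => //; exact: conjc0. Qed.
Lemma sconjn n : sconj (n%:R : scal R s) = n%:R.
Proof. case: s => //; exact: conjc_nat. Qed.
Lemma sreD a b : sre (a + b) = sre a + sre b.
Proof. by case: s a b => a b //=; case: a => ? ?; case: b. Qed.
Lemma sreN a : sre (- a) = - sre a.
Proof. by case: s a => a //=; case: a. Qed.
Lemma sre0 : sre (0 : scal R s) = 0.
Proof. by case: s. Qed.
Lemma sreJ a : sre (sconj a) = sre a.
Proof. by case: s a => a //=; case: a. Qed.
Lemma sre_ge0 a : 0 <= a -> 0 <= sre a.
Proof. by case: s a => a //=; rewrite lecE /= => /andP[]. Qed.
Lemma sre_eq0 a : 0 <= a -> sre a = 0 -> a = 0.
Proof.
case: s a => a //=; case: a => x y; rewrite lecE /= => /andP[/eqP yE _] xE.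
by rewrite xE yE.
Qed.
Lemma sre_nrm a : 0 <= sre (a * sconj a).
Proof.
case: s a => a /=; first by rewrite -expr2 sqr_ge0.
by have := mulcJ_ge0 a; rewrite lecE => /andP[_].
Qed.
Lemma sreM_inj t a : sre (sinj R s t * a) = t * sre a.
Proof. by case: s a => a //=; case: a => x y /=; rewrite mul0r subr0. Qed.
Lemma sconj_inj t : sconj (sinj R s t) = sinj R s t.
Proof. case: s => //; exact: conjc_real. Qed.
Lemma sre_sum n (f : nat -> scal R s) : sre (\sum_(k < n) f k) = \sum_(k < n) sre (f k).
Proof.
elim: n => [|n IH]; first by rewrite !big_ord0 sre0.
by rewrite !big_ord_recr /= sreD IH.
Qed.
Lemma sre_sumo n (f : 'I_n -> scal R s) : sre (\sum_(k < n) f k) = \sum_(k < n) sre (f k).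
Proof.
elim: n f => [|n IH] f; first by rewrite !big_ord0 sre0.
by rewrite !big_ord_recr /= sreD IH.
Qed.
End Sc.
Lemma sub3 (M : zmodType) (w p q : M) : p - q = (w - q) - (w - p).
Proof. by rewrite opprB [RHS]addrC subrKA. Qed.
Lemma sub4 (M : zmodType) (a b c d : M) : a - b - (c - d) = (a - c) - (b - d).
Proof. by rewrite !opprB addrACA [RHS]addrACA [- b + _]addrC. Qed.
Lemma sub5 (M : zmodType) (w p : M) : p = w - (w - p).
Proof. by rewrite opprB [RHS]addrC subrK. Qed.
Lemma mask_sum (M : zmodType) (f : nat -> M) m n : (m <= n)%N ->
  \sum_(k < n) (if (m <= k)%N then f k else 0) = \sum_(k < n) f k - \sum_(k < m) f k.
Proof.
elim: n => [|n IH]; first by rewrite leqn0 => /eqP ->; rewrite !big_ord0 subrr.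
rewrite leq_eqVlt => /orP[/eqP ->|]; last first.
  by rewrite ltnS => le; rewrite !big_ord_recr /= IH // le addrAC.
rewrite subrr big1 // => i _; rewrite leqNgt ltnS (leq_ord i) //.
Qed.
Section H.
Variables (R : realType) (s : scalars) (V : lmodType (scal R s)).
Variable ip : V -> V -> scal R s.
Hypothesis Hip : is_inner_product ip.

Let Hlin : forall a (x y z : V), ip (a *: x + y) z = a * ip x z + ip y z.
Proof. by move: Hip => [H _ _ _]. Qed.
Let Hsym : forall x y : V, ip y x = sconj (ip x y).
Proof. by move: Hip => [_ H _ _]. Qed.
Let Hpos : forall x : V, 0 <= ip x x.
Proof. by move: Hip => [_ _ H _]. Qed.
Let Hdef : forall x : V, ip x x = 0 -> x = 0.
Proof. by move: Hip => [_ _ _ H]. Qed.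

Let N2 (x : V) : R := sre (ip x x).
Local Notation hn := (hnorm ip).

Lemma ipD_l x y z : ip (x + y) z = ip x z + ip y z.
Proof. by have := Hlin 1 x y z; rewrite scale1r mul1r. Qed.
Lemma ip0_l z : ip 0 z = 0.
Proof.
have h := ipD_l 0 0 z; rewrite addr0 in h.
by apply: (@addrI _ (ip 0 z)); rewrite addr0 -h.
Qed.
Lemma ipZ_l a x z : ip (a *: x) z = a * ip x z.
Proof. by rewrite -[_ *: x]addr0 Hlin ip0_l addr0. Qed.
Lemma ipN_l x z : ip (- x) z = - ip x z.
Proof. by rewrite -scaleN1r ipZ_l mulN1r. Qed.
Lemma ipB_l x y z : ip (x - y) z = ip x z - ip y z.
Proof. by rewrite ipD_l ipN_l. Qed.
Lemma ip_sym x y : ip y x = sconj (ip x y).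
Proof. exact: Hsym. Qed.
Lemma ipD_r x y z : ip z (x + y) = ip z x + ip z y.
Proof. by rewrite ip_sym ipD_l sconjD -!ip_sym. Qed.
Lemma ipZ_r a x z : ip z (a *: x) = sconj a * ip z x.
Proof. by rewrite ip_sym ipZ_l sconjM -ip_sym. Qed.
Lemma ip0_r z : ip z 0 = 0.
Proof. by rewrite ip_sym ip0_l sconj0. Qed.
Lemma ipN_r x z : ip z (- x) = - ip z x.
Proof. by rewrite ip_sym ipN_l sconjN -ip_sym. Qed.
Lemma ipB_r x y z : ip z (x - y) = ip z x - ip z y.
Proof. by rewrite ipD_r ipN_r. Qed.
Lemma ip_sum_l n (f : nat -> V) z :
  ip (\sum_(k < n) f k) z = \sum_(k < n) ip (f k) z.
Proof.
elim: n => [|n IH]; first by rewrite !big_ord0 ip0_l.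
by rewrite !big_ord_recr /= ipD_l IH.
Qed.
Lemma reip_sym x y : sre (ip y x) = sre (ip x y).
Proof. by rewrite ip_sym sreJ. Qed.
Lemma N2_ge0 x : 0 <= N2 x.
Proof. by apply: sre_ge0. Qed.
Lemma N2_eq0 x : N2 x = 0 -> x = 0.
Proof. by move=> h; apply: Hdef; apply: sre_eq0. Qed.
Lemma N2D x y : N2 (x + y) = N2 x + N2 y + 2 * sre (ip x y).
Proof.
rewrite /N2 ipD_l !ipD_r !sreD (reip_sym x y); lra.
Qed.
Lemma N2N x : N2 (- x) = N2 x.
Proof. by rewrite /N2 ipN_l ipN_r opprK. Qed.
Lemma N2B x y : N2 (x - y) = N2 x + N2 y - 2 * sre (ip x y).
Proof. by rewrite N2D N2N ipN_r sreN; lra. Qed.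

Lemma CS x y : sre (ip x y) ^+ 2 <= N2 x * N2 y.
Proof.
have [y0|ypos] := eqVneq (N2 y) 0.
  by rewrite (N2_eq0 _ y0) ip0_r sre0 expr0n /= /N2 ip0_l sre0 mulr0.
have ny : 0 < N2 y by rewrite lt0r ypos N2_ge0.
set b := sre (ip x y).
pose t := - b / N2 y.
have H := N2_ge0 (x + sinj R s t *: y).
rewrite N2D /N2 ipZ_r ipZ_l ipZ_r sconj_inj !sreM_inj in H.
rewrite -/(N2 x) -/(N2 y) -/b in H.
have E : N2 x * N2 y - b ^+ 2 = N2 y * (N2 x + t * (t * N2 y) + 2 * (t * b)).
  rewrite /t; field; by rewrite ypos.
rewrite -subr_ge0 E; apply: mulr_ge0 => //; exact: ltW.
Qed.

Lemma hn_ge0 x : 0 <= hn x.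
Proof. exact: sqrtr_ge0. Qed.
Lemma hn_sqr x : hn x ^+ 2 = N2 x.
Proof. by rewrite /hnorm sqr_sqrtr // N2_ge0. Qed.
Lemma hnN x : hn (- x) = hn x.
Proof. by rewrite /hnorm -/(N2 _) N2N. Qed.
Lemma hnB x y : hn (x - y) = hn (y - x).
Proof. by rewrite -hnN opprB. Qed.
Lemma hn_le x y : N2 x <= N2 y -> hn x <= hn y.
Proof. by move=> h; rewrite /hnorm ler_sqrt // N2_ge0. Qed.
Lemma hn_eq0 x : hn x = 0 -> x = 0.
Proof.
move=> /eqP; rewrite sqrtr_eq0 => h; apply: N2_eq0.
by apply/eqP; rewrite eq_le h N2_ge0.
Qed.
Lemma hn_small x : (forall eps, 0 < eps -> hn x < eps) -> x = 0.
Proof.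
move=> h; apply: hn_eq0; apply/eqP; rewrite eq_le hn_ge0 andbT.
by rewrite leNgt; apply/negP => /h; rewrite ltxx.
Qed.
Lemma reip_le x y : sre (ip x y) <= hn x * hn y.
Proof.
have := CS x y; rewrite -!hn_sqr -exprMn => h.
apply: le_trans (ler_norm _) _.
by rewrite -(@ler_pXn2r _ 2) ?nnegrE ?mulr_ge0 ?hn_ge0 // real_normK ?num_real.
Qed.
Lemma hn_tri x y : hn (x + y) <= hn x + hn y.
Proof.
rewrite -(@ler_pXn2r _ 2) ?nnegrE ?addr_ge0 ?hn_ge0 //.
rewrite hn_sqr N2D -!hn_sqr sqrrD; have := reip_le x y; lra.
Qed.
Lemma hn_pyth x y : ip x y = 0 -> hn x <= hn (x + y).
Proof.
move=> h; apply: hn_le; rewrite N2D h sre0; have := N2_ge0 y; lra.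
Qed.

Definition lim_to (u : nat -> V) (p : V) := forall eps : R, 0 < eps ->
  exists N : nat, forall n : nat, (N <= n)%N -> hn (u n - p) < eps.

Lemma lim_unique u p q : lim_to u p -> lim_to u q -> p = q.
Proof.
move=> hp hq; apply/eqP; rewrite -subr_eq0; apply/eqP/hn_small => eps e0.
have e2 : 0 < eps / 2 by rewrite divr_gt0.
have [N1 h1] := hp _ e2; have [N2' h2] := hq _ e2.
have := h1 (maxn N1 N2') (leq_maxl _ _); have := h2 (maxn N1 N2') (leq_maxr _ _).
set w := u _ => a b.
rewrite (sub3 _ w).
apply: le_lt_trans (hn_tri _ _) _; rewrite hnN; lra.
Qed.

Lemma lim_sub u v p q : lim_to u p -> lim_to v q ->
  lim_to (fun n => u n - v n) (p - q).
Proof.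
move=> hp hq eps e0.
have e2 : 0 < eps / 2 by rewrite divr_gt0.
have [N1 h1] := hp _ e2; have [N2' h2] := hq _ e2.
exists (maxn N1 N2') => n hn'.
have := h1 n (leq_trans (leq_maxl _ _) hn'); have := h2 n (leq_trans (leq_maxr _ _) hn').
move=> a b.
rewrite sub4.
apply: le_lt_trans (hn_tri _ _) _; rewrite hnN; lra.
Qed.

Lemma lim_norm u p B : lim_to u p -> (forall n, hn (u n) <= B) -> hn p <= B.
Proof.
move=> hp hB; rewrite leNgt; apply/negP => lt.
have e0 : 0 < hn p - B by rewrite subr_gt0.
have [N h] := hp _ e0; have := h N (leqnn N); have := hB N.
move=> a b; have := hn_tri (u N) (- (u N - p)); rewrite hnN -sub5. lra.
Qed.

Lemma lim_ev u p m : (forall n, (m <= n)%N -> u n = p) -> lim_to u p.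
Proof. by move=> h eps e0; exists m => n /h ->; rewrite subrr /hnorm ip0_l sre0 sqrtr0. Qed.


Variable e : nat -> V.
Hypothesis He : forall j k : nat, ip (e j) (e k) = (j == k)%:R.

Definition A (a : nat -> scal R s) (n : nat) : V := \sum_(k < n) a k *: e k.

Lemma ipA_e a n k : ip (A a n) (e k) = if (k < n)%N then a k else 0.
Proof.
rewrite /A; elim: n => [|n IH]; first by rewrite big_ord0 ip0_l.
rewrite big_ord_recr /= ipD_l IH ipZ_l He ltnS.
case: (ltngtP k n) => h.
- by rewrite mulr0 addr0.
- by rewrite mulr0 addr0.
- by rewrite ?h ?eqxx mulr1 add0r.
Qed.

Lemma ipA_l a n y : ip (A a n) y = \sum_(k < n) a k * ip (e k) y.
Proof. by rewrite /A (ip_sum_l _ (fun k => a k *: e k)); apply: eq_bigr => k _; rewrite ipZ_l. Qed.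

Lemma ipAA a b n : ip (A a n) (A b n) = \sum_(k < n) a k * sconj (b k).
Proof.
rewrite ipA_l; apply: eq_bigr => k _.
by rewrite ip_sym ipA_e ltn_ord.
Qed.

Lemma AB a b n : A a n - A b n = A (fun k => a k - b k) n.
Proof. by rewrite /A -sumrB; apply: eq_bigr => k _; rewrite scalerBl. Qed.

Definition cf (x : V) (k : nat) := ip x (e k).
Definition S (x : V) (n : nat) := A (cf x) n.
Definition Bn (x : V) (n : nat) := \sum_(k < n) sre (cf x k * sconj (cf x k)).

Lemma N2S x n : N2 (S x n) = Bn x n.
Proof. by rewrite /N2 /S ipAA sre_sumo. Qed.

Lemma reSx x n : sre (ip x (S x n)) = Bn x n.
Proof.
rewrite reip_sym /S ipA_l sre_sumo; apply: eq_bigr => k _.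
by rewrite ip_sym.
Qed.

Lemma bessel x n : Bn x n <= N2 x.
Proof.
have := N2_ge0 (x - S x n); rewrite N2B N2S reSx; lra.
Qed.

Lemma Sdiff x m n : (m <= n)%N ->
  S x n - S x m = A (fun k => if (m <= k)%N then cf x k else 0) n.
Proof.
move=> le; rewrite /S /A -(mask_sum _ (fun k => cf x k *: e k)) //; apply: eq_bigr => k _.
by case: ifP => // _; rewrite scale0r.
Qed.

Lemma N2Sdiff x m n : (m <= n)%N -> N2 (S x n - S x m) = Bn x n - Bn x m.
Proof.
move=> le; rewrite Sdiff // /N2 ipAA sre_sumo /Bn -(mask_sum _ (fun k => sre (cf x k * sconj (cf x k)))) //.
apply: eq_bigr => k _; case: ifP => // _.
by rewrite sconj0 mulr0 sre0.
Qed.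

Lemma Bn_mono x m n : (m <= n)%N -> Bn x m <= Bn x n.
Proof. by move=> le; rewrite -subr_ge0 -N2Sdiff // N2_ge0. Qed.

Lemma cauchyB x eps : 0 < eps -> exists N, forall m n,
  (N <= m)%N -> (m <= n)%N -> Bn x n - Bn x m < eps.
Proof.
move=> e0.
pose E : R -> Prop := fun r => exists n, r = Bn x n.
have hs : has_sup E.
  split; first by exists (Bn x 0); exists 0%N.
  exists (N2 x) => r [n ->]; exact: bessel.
have [r [N ->] hr] := sup_adherent e0 hs.
exists N => m n hm hn'.
have h1 : Bn x n <= sup E by apply: (sup_upper_bound hs); exists n.
have h2 := Bn_mono x _ _ hm.
lra.
Qed.

Lemma S_cauchy x eps : 0 < eps -> exists N, forall m n,
  (N <= m)%N -> (N <= n)%N -> hn (S x m - S x n) < eps.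
Proof.
move=> e0; have [N hN] := cauchyB x _ (mulr_gt0 e0 e0).
have key : forall m n, (N <= m)%N -> (m <= n)%N -> hn (S x n - S x m) < eps.
  move=> m n hm hmn; rewrite /hnorm -/(N2 _) N2Sdiff //.
  rewrite -(ger0_norm (ltW e0)) -sqrtr_sqr ltr_sqrt ?exprn_gt0 //.
  by rewrite expr2; apply: hN.
exists N => m n hm hn'.
case: (leqP m n) => h; first by rewrite hnB; apply: key.
by apply: key => //; apply: ltnW.
Qed.

Hypothesis Hcomp : hcomplete ip.

Lemma S_lim x : exists l, lim_to (S x) l.
Proof. by apply: Hcomp; apply: S_cauchy. Qed.

Definition P (x : V) : V := epsilon (inhabits 0) (lim_to (S x)).

Lemma P_spec x : lim_to (S x) (P x).
Proof. exact: (epsilon_spec (inhabits 0) _ (S_lim x)). Qed.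

Lemma SB x y n : S (x - y) n = S x n - S y n.
Proof. by rewrite /S AB /A; apply: eq_bigr => k _; rewrite /cf ipB_l. Qed.

Lemma P_B x y : P (x - y) = P x - P y.
Proof.
apply: (lim_unique _ _ _ (P_spec (x - y))).
have h := lim_sub _ _ _ _ (P_spec x) (P_spec y).
move=> eps e0; have [N hN] := h eps e0; exists N => n hn'.
by rewrite SB; apply: hN.
Qed.

Lemma P_norm x : hn (P x) <= hn x.
Proof.
apply: (lim_norm _ _ _ (P_spec x)) => n; apply: hn_le.
by rewrite N2S; apply: bessel.
Qed.

Lemma P_cspan x : in_cspan ip e (P x).
Proof.
move=> eps e0; have [N hN] := P_spec x eps e0.
exists (S x N); split; first by exists N, (cf x).
by rewrite hnB; apply: hN.
Qed.

Lemma P_span a m : P (A a m) = A a m.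
Proof.
apply: (lim_unique _ _ _ (P_spec _)); apply: (lim_ev _ _ m) => n le.
rewrite /S [in RHS]/A (big_ord_widen n (fun k => a k *: e k) le) big_mkcond /A.
apply: eq_bigr => k _; rewrite /cf ipA_e; case: ifP => //.
by rewrite scale0r.
Qed.

Lemma P_cspan_id z : in_cspan ip e z -> P z = z.
Proof.
move=> hz; apply/eqP; rewrite -subr_eq0; apply/eqP/hn_small => eps e0.
have e2 : 0 < eps / 2 by rewrite divr_gt0.
have [y0 [[m [a ->]] hy]] := hz _ e2.
have hP := P_span a m; rewrite /A in hP.
set y := \sum_(k < m) a k *: e k in hP *.
have -> : P z - z = P (z - y) - (z - y) by rewrite P_B hP sub4 subrr subr0.
apply: le_lt_trans (hn_tri _ _) _.
have := P_norm (z - \sum_(k < m) a k *: e k); rewrite hnN; lra.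
Qed.

Variable es : nat -> V.
Hypothesis Hees : forall j i : nat, ip (e j) (es i) = 0.

Lemma P_es b i : P (b *: es i) = 0.
Proof.
apply: (lim_unique _ _ _ (P_spec _)); apply: (lim_ev _ _ 0) => n _.
rewrite /S /A big1 // => k _.
by rewrite /cf ipZ_l ip_sym Hees sconj0 mulr0 scale0r.
Qed.

End H.
Theorem corollary5 (R : realType) (s : scalars) (V : lmodType (scal R s))
    (ip : V -> V -> scal R s) (e es : nat -> V)
    (HX : hilbert_with_onb ip e es)
    (F : V -> R) (M1 M2 : R)
    (Fcont : continuous_on ip (in_cspan ip e) F)
    (F0 : F 0 = 0)
    (M1pos : 0 < M1) (M2pos : 0 < M2)
    (Hplus : forall z1 z2 : V, on_axes e z1 -> on_axes e z2 -> horth ip z1 z2 ->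
        posp F z1 + posp F z2 <= M1 * hnorm ip (z1 + z2))
    (Hminus : forall z1 z2 : V, on_axes e z1 -> on_axes e z2 -> horth ip z1 z2 ->
        negp F z1 + negp F z2 <= M2 * hnorm ip (z1 + z2)) :
  exists Fh : V -> R,
    [/\ continuous_on ip (fun _ => True) Fh,
        forall z : V, in_cspan ip e z -> Fh z = F z
      & forall x1 x2 : V,
          (on_axes e x1 \/ on_axes es x1) -> (on_axes e x2 \/ on_axes es x2) ->
          horth ip x1 x2 ->
          `|Fh x1 + Fh x2| <= (M1 + M2) * hnorm ip (x1 + x2)].
Proof.
move: HX => [Hip Hcomp [He _ Hees] _].
have PB := P_B _ _ _ _ Hip _ He Hcomp.
have Pn := P_norm _ _ _ _ Hip _ He Hcomp.
have Pc := P_cspan _ _ _ _ Hip _ He Hcomp.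
have Pid := P_cspan_id _ _ _ _ Hip _ He Hcomp.
have Pes := P_es _ _ _ _ Hip _ He Hcomp _ Hees.
have hge0 := hn_ge0 _ _ _ ip.
have key : forall z1 z2, on_axes e z1 -> on_axes e z2 -> horth ip z1 z2 ->
    `|F z1 + F z2| <= (M1 + M2) * hnorm ip (z1 + z2).
  move=> z1 z2 h1 h2 ho.
  have := Hplus _ _ h1 h2 ho; have := Hminus _ _ h1 h2 ho.
  have := hge0 (z1 + z2).
  rewrite /posp /negp; set h := hnorm ip (z1 + z2).
  have a1 : F z1 <= Num.max (F z1) 0 by rewrite le_max lexx.
  have a2 : F z2 <= Num.max (F z2) 0 by rewrite le_max lexx.
  have b1 : - F z1 <= Num.max (- F z1) 0 by rewrite le_max lexx.
  have b2 : - F z2 <= Num.max (- F z2) 0 by rewrite le_max lexx.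
  move=> hh c1 c2; rewrite ler_norml; apply/andP; split.
    have : 0 <= M1 * h by apply: mulr_ge0 => //; exact: ltW.
    have : M2 * h <= M2 * h by [].
    rewrite mulrDl. lra.
  have : 0 <= M2 * h by apply: mulr_ge0 => //; exact: ltW.
  rewrite mulrDl. lra.
have axe : forall x, on_axes e x -> in_cspan ip e x.
  move=> x [j [a ->]] eps e0; exists (a *: e j); split.
    exists j.+1, (fun k => if k == j then a else 0).
    rewrite big_ord_recr /= eqxx big1 ?add0r // => k _.
    by rewrite (ltn_eqF (ltn_ord k)) scale0r.
  by rewrite subrr /hnorm ip0_l ?sre0 ?sqrtr0.
have ax0 : on_axes e 0 by exists 0%N, 0; rewrite scale0r.
have Pes' : forall x, on_axes es x -> P _ _ _ ip e x = 0.
  by move=> x [i [b ->]]; apply: Pes.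
exists (fun x => F (P _ _ _ ip e x)); split.
- move=> x _ eps e0.
  have [d d0 hd] := Fcont _ (Pc x) eps e0.
  exists d => // y _ hy; apply: hd; first exact: Pc.
  by rewrite -PB; apply: le_lt_trans (Pn _) hy.
- by move=> z hz; rewrite Pid.
- move=> x1 x2 [h1|h1] [h2|h2] ho.
  + by rewrite (Pid _ (axe _ h1)) (Pid _ (axe _ h2)); apply: key.
  + rewrite (Pid _ (axe _ h1)) Pes' //.
    apply: le_trans (key _ _ h1 ax0 (ip0_r _ _ _ _ Hip _)) _.
    rewrite addr0; apply: ler_wpM2l; first by rewrite addr_ge0 // ltW.
    exact: (hn_pyth _ _ _ _ Hip).
  + rewrite (Pid _ (axe _ h2)) (Pes' x1) //.
    apply: le_trans (key _ _ ax0 h2 (ip0_l _ _ _ _ Hip _)) _.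
    rewrite add0r; apply: ler_wpM2l; first by rewrite addr_ge0 // ltW.
    rewrite addrC; apply: (hn_pyth _ _ _ _ Hip).
    by rewrite (ip_sym _ _ _ _ Hip) ho sconj0.
  + rewrite !Pes' // F0 addr0 normr0.
    by apply: mulr_ge0; [rewrite addr_ge0 // ltW | exact: hge0].
Qed.
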